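(* Let $G\ge1$ and, for each group $v\in\{1,\ldots,G\}$, let $X_{v1},\ldots,X_{vN_v}\in L^2[0,1]$ be observed functions (assumed mean zero). Fix a number of layers $D\ge1$ and, for each layer $d=1,\ldots,D$, a partition of $\{1,\ldots,G\}$ into disjoint communities $\mathcal{K}_{d1},\mathcal{K}_{d2},\ldots$, such that the partitions are nested: every community of layer $d$ is contained in some community of layer $d-1$ ($d\ge2$). Write $c_{v,d}$ for the index $i$ of the community $\mathcal{K}_{di}$ containing $v$. Fix weights $f_v^{(d-1)}>0$. Define recursively, for $d=1,\ldots,D$: $R^{(0)}_{vn}=X_{vn}$; $$\widehat\Gamma^{(d-1)}_v(\cdot)=\frac1{N_v}\sum_{n=1}^{N_v}\langle R^{(d-1)}_{vn},\cdot\rangle R^{(d-1)}_{vn};$$ for each community $\mathcal{K}_{di}$, let $\hat\psi_{di}$ be a unit-norm eigenfunction of $\sum_{v\in\mathcal{K}_{di}}f^{(d-1)}_v\widehat\Gamma^{(d-1)}_v$ associated with its largest eigenvalue, assumed strictly positive (equivalently, $\hat\psi_{di}$ maximizes $\sum_{v\in\mathcal{K}_{di}}\sum_{n=1}^{N_v}N_v^{-1}f_v^{(d-1)}\langle R^{(d-1)}_{vn},\phi\rangle^2$ over $\|\phi\|=1$); set $\hat\phi_d^{(c_{v,d})}=\hat\psi_{di}$ for $v\in\mathcal{K}_{di}$; and set $$R^{(d)}_{vn}=X_{vn}-\sum_{j=1}^{d}\langle X_{vn},\hat\phi_j^{(c_{v,j})}\rangle\hat\phi_j^{(c_{v,j})}.$$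 Then for every group $v$, the functions $\hat\phi_1^{(c_{v,1})},\ldots,\hat\phi_D^{(c_{v,D})}$ are orthonormal in $L^2[0,1]$, i.e. $\langle\hat\phi_d^{(c_{v,d})},\hat\phi_{d'}^{(c_{v,d'})}\rangle=0$ for $d\neq d'$ and $\|\hat\phi_d^{(c_{v,d})}\|=1$.
   Context: $L^2[0,1]$ is equipped with the inner product $\langle x,y\rangle=\int_0^1 x(t)y(t)\,dt$ and norm $\|x\|^2=\langle x,x\rangle$. A ''community'' is a set of groups that share one common filtrated functional principal component in a given layer; the communities of each layer form a partition of the groups, and the partitions across layers form a tree (nested) structure. *)

(* Defs.v *)
From HB Require Import structures.
From mathcomp Require Import all_boot all_order all_algebra.
From mathcomp Require Import all_classical all_reals all_analysis.
Set Implicit Arguments. Unset Strict Implicit. Unset Printing Implicit Defensive.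
Import Order.TTheory GRing.Theory Num.Theory.
Local Open Scope classical_set_scope.
Local Open Scope ring_scope.

Section L2.
Variable R : realType.

Definition I01 : set R := `[0%R, 1%R].

Definition ip (x y : R -> R) : R :=
  Rintegral (@lebesgue_measure R) I01 (fun t => x t * y t).

Definition inL2 (x : R -> R) : Prop :=
  measurable_fun I01 x /\
  (@lebesgue_measure R).-integrable I01 (fun t => (x t ^+ 2)%:E).

(* equality in L^2[0,1] (i.e. almost everywhere on [0,1]) *)
Definition L2eq (x y : R -> R) : Prop := ip (x \- y) (x \- y) = 0.

Definition top_eigfun (op : (R -> R) -> (R -> R)) (psi : R -> R) : Prop :=
  inL2 psi /\ ip psi psi = 1 /\
  exists lam : R, 0 < lam /\ L2eq (op psi) (fun t => lam * psi t) /\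
    (forall (mu : R) (g : R -> R), inL2 g -> ip g g != 0 ->
        L2eq (op g) (fun t => mu * g t) -> mu <= lam).

(* Communities: c d v = index of the community of layer d containing v.
   phi d i = \hat\psi_{di} (layers d = 1..D). *)
Definition resid (G : nat) (N : 'I_G -> nat) (X : forall v : 'I_G, 'I_(N v) -> R -> R)
  (c : nat -> 'I_G -> nat) (phi : nat -> nat -> R -> R)
  (d : nat) (v : 'I_G) (n : 'I_(N v)) : R -> R :=
  fun t => X v n t - \sum_(j < d) ip (X v n) (phi j.+1 (c j.+1 v)) * phi j.+1 (c j.+1 v) t.

Definition Gam (G : nat) (N : 'I_G -> nat) (X : forall v : 'I_G, 'I_(N v) -> R -> R)
  (c : nat -> 'I_G -> nat) (phi : nat -> nat -> R -> R)
  (d : nat) (v : 'I_G) (g : R -> R) : R -> R :=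
  fun t => (N v)%:R^-1 *
    \sum_(n < N v) ip (resid X c phi d n) g * resid X c phi d n t.

Definition commOp (G : nat) (N : 'I_G -> nat) (X : forall v : 'I_G, 'I_(N v) -> R -> R)
  (c : nat -> 'I_G -> nat) (phi : nat -> nat -> R -> R) (f : nat -> 'I_G -> R)
  (d i : nat) (g : R -> R) : R -> R :=
  fun t => \sum_(v : 'I_G | c d v == i) f d.-1 v * Gam X c phi d.-1 v g t.

End L2.

(* Main.v *)
Set Warnings "-all".
Require Import Defs.
From HB Require Import structures.
From mathcomp Require Import all_boot all_order all_algebra.
From mathcomp Require Import all_classical all_reals all_analysis.
From mathcomp Require Import ring lra zify.
Import Order.TTheory GRing.Theory Num.Theory.
Local Open Scope ring_scope.
Local Open Scope classical_set_scope.

Section H.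
Context (R : realType).
Local Notation mu := (@lebesgue_measure R).
Local Notation I := (@I01 R).
Local Notation L := (@inL2 R).
Implicit Types x y z h g : R -> R.

Lemma mI01 : measurable I.
Proof. exact: measurable_itv. Qed.

Lemma L2_int_mul (x y : R -> R) : L x -> L y ->
  mu.-integrable I (EFin \o (fun t => x t * y t)).
Proof.
move=> [mx ix] [my iy].
have key : forall a b : R, `|a * b| <= `|a ^+ 2 + b ^+ 2|.
  move=> a b; rewrite [`|_ + _|]ger0_norm ?addr_ge0 ?sqr_ge0 // normrM.
  have := sqr_ge0 (`|a| - `|b|); rewrite sqrrB !real_normK ?num_real //.
  have := normr_ge0 a; have := normr_ge0 b. nra.
apply: (le_integrable _ _ _ (integrableD _ ix iy)); try exact: measurable_itv.
- exact/measurable_realfun.measurable_EFinP/measurable_realfun.measurable_funM.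
- move=> t _ /=; rewrite lee_fin; exact: key.
Qed.


Lemma mI : measurable (I : set (measurableTypeR R)).
Proof. exact: measurable_itv. Qed.

Arguments L2_int_mul {x y}.

Lemma L2D x y : L x -> L y -> L (fun t => x t + y t).
Proof.
move=> [mx ix] [my iy]; split; first exact: measurable_realfun.measurable_funD.
have key : forall a b : R, `|(a + b) ^+ 2| <= `|2 * a ^+ 2 + 2 * b ^+ 2|.
  move=> a b; rewrite (ger0_norm (sqr_ge0 _)) ger0_norm; last first.
    by apply: addr_ge0; apply: mulr_ge0 => //; exact: sqr_ge0.
  have := sqr_ge0 (a - b); rewrite !expr2; nra.
have i2 := integrableD mI (integrableZl mI 2 ix) (integrableZl mI 2 iy).
apply: (le_integrable mI _ _ i2).
- apply/measurable_realfun.measurable_EFinP/measurable_realfun.measurable_funX.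
  exact: measurable_realfun.measurable_funD.
- move=> t _ /=; rewrite lee_fin; exact: key.
Qed.

Lemma L2Z k x : L x -> L (fun t => k * x t).
Proof.
move=> [mx ix]; split.
  exact: (measurable_realfun.measurable_funM (measurable_cst k) mx).
apply: (eq_integrable mI _ _ _ (integrableZl mI (k ^+ 2) ix)).
by move=> t _ /=; rewrite -EFinM exprMn.
Qed.

Lemma L2B x y : L x -> L y -> L (fun t => x t - y t).
Proof.
move=> Lx Ly.
have -> : (fun t => x t - y t) = (fun t => x t + (-1) * y t).
  by apply/funext => t; rewrite mulN1r.
exact/L2D/L2Z.
Qed.

Lemma L20 : L (fun _ => 0).
Proof.
split; first exact: measurable_cst.
apply: (eq_integrable mI _ _ _ (integrable0 _ _)).
by move=> t _ /=; rewrite expr0n.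
Qed.

Lemma L2_sum (J : Type) (s : seq J) (P : pred J) (F : J -> R -> R) :
  (forall i, P i -> L (F i)) -> L (fun t => \sum_(i <- s | P i) F i t).
Proof.
move=> HF; elim: s => [|i s IH].
  have -> : (fun t => \sum_(i <- [::] | P i) F i t) = (fun _ => 0).
    by apply/funext => t; rewrite big_nil.
  exact: L20.
have -> : (fun t => \sum_(j <- i :: s | P j) F j t) =
   (fun t => if P i then F i t + \sum_(j <- s | P j) F j t else \sum_(j <- s | P j) F j t).
  by apply/funext => t; rewrite big_cons.
by case Pi: (P i) => //; apply: L2D => //; exact: HF.
Qed.

Lemma ipC x y : ip x y = ip y x.
Proof. by rewrite /ip; apply: eq_Rintegral => t _; rewrite mulrC. Qed.

Lemma ipDl x y z : L x -> L y -> L z ->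
  ip (fun t => x t + y t) z = ip x z + ip y z.
Proof.
move=> Lx Ly Lz; rewrite /ip.
rewrite (eq_Rintegral mu (g := fun t => x t * z t + y t * z t)); last first.
  by move=> t _; rewrite mulrDl.
rewrite (RintegralD _ (L2_int_mul Lx Lz) (L2_int_mul Ly Lz)) //.
exact: measurable_itv.
Qed.

Lemma ipZl k x z : L x -> L z -> ip (fun t => k * x t) z = k * ip x z.
Proof.
move=> Lx Lz; rewrite /ip.
rewrite (eq_Rintegral mu (g := fun t => k * (x t * z t))); last first.
  by move=> t _; rewrite mulrA.
rewrite (RintegralZl _ _ (L2_int_mul Lx Lz)) //.
exact: measurable_itv.
Qed.

Lemma ip0l z : ip (fun _ => 0) z = 0.
Proof.
rewrite /ip (eq_Rintegral mu (g := fun _ => 0)); last by move=> t _; rewrite mul0r.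
by rewrite Rintegral_cst ?mul0r //; exact: measurable_itv.
Qed.

Lemma ipBl x y z : L x -> L y -> L z ->
  ip (fun t => x t - y t) z = ip x z - ip y z.
Proof.
move=> Lx Ly Lz.
have -> : (fun t => x t - y t) = (fun t => x t + (-1) * y t).
  by apply/funext => t; rewrite mulN1r.
by rewrite ipDl ?ipZl ?mulN1r //; exact: L2Z.
Qed.

Lemma ip_suml (J : Type) (s : seq J) (P : pred J) (F : J -> R -> R) z :
  (forall i, P i -> L (F i)) -> L z ->
  ip (fun t => \sum_(i <- s | P i) F i t) z = \sum_(i <- s | P i) ip (F i) z.
Proof.
move=> HF Lz; elim: s => [|i s IH].
  have -> : (fun t => \sum_(i <- [::] | P i) F i t) = (fun _ => 0).
    by apply/funext => t; rewrite big_nil.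
  by rewrite ip0l big_nil.
have -> : (fun t => \sum_(j <- i :: s | P j) F j t) =
   (fun t => if P i then F i t + \sum_(j <- s | P j) F j t else \sum_(j <- s | P j) F j t).
  by apply/funext => t; rewrite big_cons.
rewrite big_cons; case Pi: (P i) => //.
by rewrite ipDl ?IH //; [exact: HF | exact: L2_sum].
Qed.

Lemma ip_ge0 x : 0 <= ip x x.
Proof. by apply: Rintegral_ge0 => t _; rewrite -expr2 sqr_ge0. Qed.

Lemma ip_null h g : L h -> L g -> ip h h = 0 -> ip h g = 0.
Proof.
move=> Lh Lg h0.
have E : forall t, ip (fun s => h s + t * g s) (fun s => h s + t * g s) =
    2 * t * ip h g + t ^+ 2 * ip g g.
  move=> t; have Lw : L (fun s => h s + t * g s) by apply: L2D => //; exact: L2Z.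
  rewrite ipDl ?ipZl //; last exact: L2Z.
  rewrite [ip h _]ipC [ip g _]ipC ipDl ?ipZl //; last exact: L2Z.
  rewrite ipDl ?ipZl //; last exact: L2Z.
  rewrite h0 [ip g h]ipC; ring.
set a := ip h g; set b := ip g g.
have b0 : 0 <= b := ip_ge0 g.
have := ip_ge0 (fun s => h s + (- a / (b + 1)) * g s); rewrite E -/a -/b.
set t := - a / (b + 1).
have ht : t * (b + 1) = - a by rewrite /t mulfVK // gt_eqF // ltr_wpDl.
move=> H.
have ha : a = - (t * (b + 1)) by rewrite ht opprK.
rewrite ha in H.
have t2 : t ^+ 2 <= 0.
  have := sqr_ge0 t; rewrite !expr2 in H *; nra.
have /eqP : t ^+ 2 = 0 by apply/le_anti; rewrite t2 sqr_ge0.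
rewrite expf_eq0 /= => /eqP t0.
by rewrite ha t0 mul0r oppr0.
Qed.

End H.
Arguments ip_null {R h g}.
Arguments L2B {R x y}.
Arguments L2Z {R} k {x}.

Theorem proposition2 (R : realType) (G : nat) (N : 'I_G -> nat)
  (X : forall v : 'I_G, 'I_(N v) -> R -> R)
  (D : nat) (c : nat -> 'I_G -> nat) (f : nat -> 'I_G -> R)
  (phi : nat -> nat -> R -> R) :
  (0 < G)%N ->
  (forall v, 0 < N v)%N ->
  (forall v n, inL2 (X v n)) ->
  (0 < D)%N ->
  (* nested partitions: every community of layer d lies in one of layer d-1 *)
  (forall d v w, (2 <= d <= D)%N -> c d v = c d w -> c d.-1 v = c d.-1 w) ->
  (forall d v, (1 <= d <= D)%N -> 0 < f d.-1 v) ->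
  (forall d v, (1 <= d <= D)%N ->
     top_eigfun (commOp X c phi f d (c d v)) (phi d (c d v))) ->
  forall v d d', (1 <= d <= D)%N -> (1 <= d' <= D)%N ->
    ip (phi d (c d v)) (phi d' (c d' v)) = (if d == d' then 1 else 0).
Proof.
move=> G0 N0 XL D0 nestH f0 eig.
have nest : forall d j v w, (1 <= j <= d)%N -> (d <= D)%N ->
    c d v = c d w -> c j v = c j w.
  elim=> [|d IH] j v w /andP[j1 jd] dD e; first by lia.
  have [->//|jd'] := eqVneq j d.+1.
  apply: (IH j) => //; try lia.
  by apply: (nestH d.+1 v w) => //; lia.
have phiL : forall d v, (1 <= d <= D)%N -> inL2 (phi d (c d v)).
  by move=> d v hd; case: (eig d v hd).
have residL : forall m w (n : 'I_(N w)), (m <= D)%N -> inL2 (resid X c phi m n).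
  move=> m w n mD; apply: L2B => //; apply: L2_sum => j _; apply: L2Z; apply: phiL.
  by have := ltn_ord j; lia.
have main : forall k, (k <= D)%N -> forall v d d', (1 <= d <= k)%N ->
    (1 <= d' <= k)%N ->
    ip (phi d (c d v)) (phi d' (c d' v)) = (if d == d' then 1 else 0).
  elim=> [|k IH] kD v0 d0 d0' hd hd'; first by lia.
  have IH' := IH (ltnW kD).
  have orth : forall u e, (1 <= e <= k)%N ->
      ip (phi e (c e u)) (phi k.+1 (c k.+1 u)) = 0.
    move=> u e he.
    have hk1 : (1 <= k.+1 <= D)%N by lia.
    case: (eig k.+1 u hk1) => psiL [_ [lam [lam0 [Leq _]]]].
    have gL : inL2 (phi e (c e u)) by apply: phiL; lia.
    have ro : forall w (n : 'I_(N w)), c k.+1 w = c k.+1 u ->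
        ip (resid X c phi k n) (phi e (c e u)) = 0.
      move=> w n hw.
      have ce : forall j, (1 <= j <= k.+1)%N -> c j w = c j u.
        by move=> j hj; apply: (nest k.+1).
      rewrite /resid ipBl //; last first.
        by apply: L2_sum => j _; apply: L2Z; apply: phiL; have := ltn_ord j; lia.
      rewrite ip_suml //; last first.
        by move=> j _; apply: L2Z; apply: phiL; have := ltn_ord j; lia.
      rewrite (eq_bigr (fun j : 'I_k => ip (X w n) (phi j.+1 (c j.+1 u)) *
                 (if j.+1 == e then 1 else 0))); last first.
        move=> j _; have := ltn_ord j => jk.
        rewrite ipZl //; last by apply: phiL; lia.
        by rewrite (ce j.+1) ?IH' //; lia.
      have ek : (e.-1 < k)%N by lia.
      rewrite (bigD1 (Ordinal ek)) //= big1 ?addr0; last first.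
        move=> j hj; rewrite ifF ?mulr0 //; apply/negbTE; apply: contra hj => /eqP hj'.
        by apply/eqP/val_inj => /=; lia.
      have -> : e.-1.+1 = e by lia.
      by rewrite eqxx mulr1 subrr.
    have opL : forall w, inL2 (Gam X c phi k w (phi k.+1 (c k.+1 u))).
      move=> w; rewrite /Gam; apply: L2Z; apply: L2_sum => n _; apply: L2Z.
      by apply: residL; lia.
    have oo : ip (commOp X c phi f k.+1 (c k.+1 u) (phi k.+1 (c k.+1 u)))
                (phi e (c e u)) = 0.
      rewrite /commOp ip_suml //; last by move=> w _; apply: L2Z.
      apply: big1 => w /eqP hw; rewrite ipZl //.
      rewrite /Gam ipZl //; last first.
        by apply: L2_sum => n _; apply: L2Z; apply: residL; lia.
      rewrite ip_suml //; last by move=> n _; apply: L2Z; apply: residL; lia.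
      rewrite big1 ?mulr0 //.
      move=> n _; rewrite ipZl ?ro ?mulr0 //; apply: residL; lia.
    have hL : inL2 (commOp X c phi f k.+1 (c k.+1 u) (phi k.+1 (c k.+1 u))).
      by rewrite /commOp; apply: L2_sum => w _; apply: L2Z.
    have := ip_null (L2B hL (L2Z lam psiL)) gL Leq.
    rewrite ipBl //; last by apply: L2Z.
    rewrite ipZl // oo sub0r.
    move=> /eqP; rewrite oppr_eq0 mulf_eq0 (gt_eqF lam0) /= => /eqP h.
    by rewrite ipC.
  have [dk|dk] := leqP d0 k; have [dk'|dk'] := leqP d0' k.
  - by apply: IH' => //; lia.
  - have -> : d0' = k.+1 by lia.
    rewrite orth; last by lia.
    by rewrite ifF //; apply/eqP; lia.
  - have -> : d0 = k.+1 by lia.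
    rewrite ipC orth; last by lia.
    by rewrite ifF //; apply/eqP; lia.
  - have -> : d0 = k.+1 by lia.
    have -> : d0' = k.+1 by lia.
    rewrite eqxx.
    have hk1 : (1 <= k.+1 <= D)%N by lia.
    by case: (eig k.+1 v0 hk1) => _ [].
move=> v d d' hd hd'; apply: (main D) => //.
Qed.
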